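(* Every series $P\in\mathcal R^+$ is congruent modulo $\mathfrak I_0$ to the characteristic series $S_X$ of some $X\in\mathbb W$. Consequently every $S\in\mathcal R$ can be written as $S=S_X-S_Y+S_0$ for suitable $X,Y\in\mathbb W$ and $S_0\in\mathfrak I_0$.
   Context: Let $\mathbb N=\{0,1,2,\dots\}$. $\mathbb{W}$ is the family of finitary point sets: sets $A\subseteq\bigcup_{k\ge1}\mathbb N^k$ of finite tuples of natural numbers such that for every $n\in\mathbb N$ there is $h$ with $A\cap\{0,\dots,n\}^k=\emptyset$ for all $k>h$. Let $t_0,t_1,\dots$ be countably many indeterminates; let $\mathbf A$ be the set of eventually zero sequences $\mathbf a=(a_0,a_1,\dots)$ of non-negative integers, and $t^{\mathbf a}=\prod_i t_i^{a_i}$. Formal series are $S=\sum_{\mathbf a\in\mathbf A}n_{\mathbf a}t^{\mathbf a}$ with $n_{\mathbf a}\in\mathbb Z$. $\mathcal R$ is the ring of those formal series $S$ for which there exist $d_n\in\mathbb N$ $(n\in\mathbb N)$ with $n_{\mathbf a}=0$ whenever $a_n>d_n$ for some $n$ (bounded degree $d_n$ in each variable $t_n$), and some $b\in\mathbb N$ with $|n_{\mathbf a}|\le b\,(\sum_i a_i)!/\prod_i a_i!$ for all $\mathbf a$. $\mathcal R^+$ is the set of nonzero series of $\mathcal R$ all of whose coefficients are non-negative (positive series). $\mathfrak I_0$ is the ideal of $\mathcal R$ generated by $\{t_n-1:n\in\mathbb N\}$. For a tuple $x=(x_1,\dots,x_d)$ let $t_x=t^{\mathbf a}$ where $a_i=|\{j:x_j=i\}|$.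 The characteristic series of $X\in\mathbb W$ is $S_X=\sum_{x\in X}t_x$ (the coefficient of $t^{\mathbf a}$ is the number of $x\in X$ with $t_x=t^{\mathbf a}$), with $S_\emptyset=0$. *)

(* Defs.v *)
From mathcomp Require Import all_boot all_order all_algebra.
Set Implicit Arguments. Unset Strict Implicit. Unset Printing Implicit Defensive.
Import Order.TTheory GRing.Theory Num.Theory.
Local Open Scope ring_scope.

(* Exponent vectors a in A (eventually zero sequences of naturals) are encoded
   as sorted (non-decreasing) lists of naturals, i.e. finite multisets of
   indices: the list s encodes the exponent a with a_i = count_mem i s, i.e.
   the monomial t^a = prod_{i in s} t_i.  This is a bijection between A and
   sorted lists.  The tuple x has t_x = t^(sort x). *)
Definition expo := seq nat.
Definition is_expo (s : expo) : bool := sorted leq s.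

(* a formal series: its coefficient function; coefficients at non-exponent
   (unsorted) lists are required to be 0 (normal form). *)
Definition series := expo -> int.

Definition multinom (s : expo) : nat :=
  ((size s)`! %/ \prod_(i <- undup s) (count_mem i s)`!)%N.

Definition in_R (S : series) : Prop :=
  [/\ (forall s, ~~ is_expo s -> S s = 0),
      (exists d : nat -> nat, forall s, is_expo s ->
          (exists n, (d n < count_mem n s)%N) -> S s = 0) &
      (exists b : nat, forall s, is_expo s -> `|S s| <= (b * multinom s)%:R)].

Definition in_Rplus (S : series) : Prop :=
  [/\ in_R S, (exists s, S s != 0) & (forall s, 0 <= S s)].

(* multiplication of a series by the variable t_n *)
Definition mulT (n : nat) (r : series) : series :=
  fun s => if is_expo s && (n \in s) then r (rem n s) else 0.

(* the ideal I_0 of R generated by {t_n - 1 : n in N}: finite R-linear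
   combinations of the generators *)
Definition in_I0 (S : series) : Prop :=
  exists l : seq (nat * series),
    (forall i, (i < size l)%N -> in_R (nth (0%N, fun _ => 0) l i).2) /\
    (forall s, S s = \sum_(p <- l) (mulT p.1 p.2 s - p.2 s)).

Definition in_W (X : pred (seq nat)) : Prop :=
  (forall x, X x -> x != [::]) /\
  (forall n : nat, exists h : nat, forall x, X x ->
      all (fun i => (i <= n)%N) x -> (size x <= h)%N).

(* characteristic series: coefficient of t^a = #{x in X | t_x = t^a};
   the x with t_x = t^s are exactly the (distinct) permutations of s *)
Definition charser (X : pred (seq nat)) : series :=
  fun s => if is_expo s then (count X (permutations s))%:Z else 0.

(* Main.v *)
Require Import Defs.
From mathcomp Require Import all_boot all_order all_algebra.
Import Order.TTheory GRing.Theory Num.Theory.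
Set Implicit Arguments. Unset Strict Implicit. Unset Printing Implicit Defensive.
Lemma sum_count_undup (s : seq nat) :
  (\sum_(x <- undup s) count_mem x s)%N = size s.
Proof.
rewrite -(perm_size (perm_count_undup s)) size_flatten /shape -map_comp sumnE big_map.
by apply: eq_bigr => x _; rewrite /= size_nseq.
Qed.

Lemma count_rem (s : seq nat) x i : x \in s ->
  count_mem i s = ((x == i) + count_mem i (rem x s))%N.
Proof. by move=> /perm_to_rem /permP ->. Qed.

Lemma prod_rem (s r : seq nat) x : uniq r -> x \in r -> x \in s ->
  (\prod_(i <- r) (count_mem i s)`!)%N =
  (count_mem x s * \prod_(i <- r) (count_mem i (rem x s))`!)%N.
Proof.
move=> ur xr xs.
rewrite (bigD1_seq x xr ur) (@bigD1_seq _ _ _ _ r x (fun i => (count_mem i (rem x s))`!) xr ur) /= mulnA.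
congr (_ * _)%N.
  rewrite (count_rem x xs) eqxx /= add1n factS //.
apply: eq_bigr => i ix; rewrite (count_rem i xs).
by rewrite eq_sym (negbTE ix).
Qed.

Lemma perms_prod (s r : seq nat) : uniq r -> {subset s <= r} ->
  (size (permutations s) * \prod_(i <- r) (count_mem i s)`!)%N = (size s)`!.
Proof.
move=> ur.
move Hn: (size s) => n; elim: n s Hn => [|n IH] s Hn sr.
  move/size0nil: Hn => ->; rewrite big1 // => i _.
have sp : (0 < size s)%N by rewrite Hn.
rewrite (perm_size (permutationsE sp)) size_allpairs_dep sumnE big_map big_distrl /=.
rewrite factS -Hn -sum_count_undup big_distrl /=.
apply: eq_big_seq => x; rewrite mem_undup => xs.
rewrite (prod_rem ur (sr _ xs) xs) mulnCA IH; first by rewrite mulnC.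
  by rewrite size_rem // Hn.
by move=> y /mem_rem /sr.
Qed.

Lemma multinomE (s : seq nat) : multinom s = size (permutations s).
Proof.
rewrite /multinom -(@perms_prod s (undup s)) ?undup_uniq //; last by move=> x; rewrite mem_undup.
rewrite mulnK //; apply: prodn_gt0 => i; exact: fact_gt0.

Qed.

Lemma perms_cat (s u : seq nat) :
  (size (permutations s) * size (permutations u) <= size (permutations (s ++ u)))%N.
Proof.
rewrite -(size_allpairs cat).
apply: uniq_leq_size.
  apply: allpairs_uniq; try exact: permutations_uniq.
  move=> [a b] [c d] /allpairsP [[a' b'] /= [Ha _ [-> ->]]]
    /allpairsP [[c' d'] /= [Hc _ [-> ->]]] /= /eqP.
  rewrite eqseq_cat; last first.
    by move: Ha Hc; rewrite !mem_permutations => /perm_size -> /perm_size ->.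
  by case/andP => /eqP -> /eqP ->.
move=> t /allpairsP [[a b] /= [Ha Hb ->]].
by rewrite mem_permutations perm_cat // -mem_permutations.
Qed.

Lemma perms_perm (s t : seq nat) : perm_eq s t ->
  size (permutations s) = size (permutations t).
Proof. by move=> /perm_permutations /perm_size. Qed.

Lemma perms_rem (s : seq nat) x : x \in s ->
  (size (permutations (rem x s)) <= size (permutations s))%N.
Proof.
move=> xs; rewrite (perms_perm (perm_to_rem xs)).
rewrite (@perms_perm (x :: rem x s) (rem x s ++ [:: x])); last first.
  by rewrite perm_sym cats1 perm_rcons.
by have := perms_cat (rem x s) [:: x]; rewrite muln1.
Qed.

From mathcomp Require Import ring.
Local Open Scope ring_scope.

Lemma multinom_rem (s : seq nat) x : x \in s -> (multinom (rem x s) <= multinom s)%N.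
Proof. by move=> xs; rewrite !multinomE perms_rem. Qed.

Lemma expo_rem (s : seq nat) x : is_expo s -> is_expo (rem x s).
Proof. move=> hs; exact: (subseq_sorted leq_trans (rem_subseq x s) hs). Qed.

Lemma in_R_mulT n r : in_R r -> in_R (mulT n r).
Proof.
case=> [H0 [d Hd] [b Hb]]; split.
- by move=> s hs; rewrite /mulT (negbTE hs).
- exists (fun i => (d i + (i == n))%N) => s hs [m hm].
  rewrite /mulT hs /=; case: ifP => // ns; apply: Hd; first exact: expo_rem.
  exists m; move: hm; rewrite (count_rem m ns) eq_sym [X in (_ < X)%N]addnC ltn_add2r.
  by [].
- exists b => s hs; rewrite /mulT hs /=; case: ifP => [ns|_]; last by rewrite normr0.
  apply: le_trans (Hb _ (expo_rem _ hs)) _.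
  by rewrite ler_nat leq_mul2l multinom_rem ?orbT.
Qed.

Lemma in_R_dom S F : in_R S -> (forall s, `|F s| <= `|S s|) ->
  (forall s, S s = 0 -> F s = 0) -> in_R F.
Proof.
case=> [H0 [d Hd] [b Hb]] hle hz; split.
- by move=> s hs; apply: hz; apply: H0.
- by exists d => s hs e; apply: hz; apply: Hd.
- by exists b => s hs; apply: le_trans (hle s) (Hb s hs).
Qed.

Lemma in_R_neg r : in_R r -> in_R (fun s => - r s).
Proof.
move=> hr; apply: (in_R_dom hr) => s; first by rewrite normrN.
by move=> ->; rewrite oppr0.
Qed.

Lemma mulT_neg n r s : mulT n (fun s => - r s) s = - mulT n r s.
Proof. by rewrite /mulT; case: ifP; rewrite ?oppr0. Qed.

Lemma in_I0_ext A B : in_I0 A -> (forall s, A s = B s) -> in_I0 B.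
Proof. by move=> [l [H1 H2]] e; exists l; split => // s; rewrite -e. Qed.

Lemma in_I0_zero : in_I0 (fun _ => 0).
Proof. by exists [::]; split => // s; rewrite big_nil. Qed.

Lemma in_I0_add A B : in_I0 A -> in_I0 B -> in_I0 (fun s => A s + B s).
Proof.
move=> [la [Ra Ea]] [lb [Rb Eb]]; exists (la ++ lb); split.
- move=> i; rewrite size_cat nth_cat; case: ifP => [hi _|hi hs]; first exact: Ra.
  apply: Rb; move/negbT: hi; rewrite -leqNgt => hi; by rewrite ltn_subLR.
- by move=> s; rewrite big_cat Ea Eb.
Qed.

Lemma in_I0_neg A : in_I0 A -> in_I0 (fun s => - A s).
Proof.
move=> [la [Ra Ea]]; exists (map (fun p => (p.1, fun s => - p.2 s)) la); split.
- move=> i; rewrite size_map => hi; rewrite (nth_map (0%N, fun _ => 0)) //=.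
  exact: in_R_neg (Ra _ hi).
- move=> s; rewrite big_map Ea -sumrN; apply: eq_bigr => p _ /=.
  rewrite mulT_neg; ring.
Qed.

Lemma in_I0_gen n r : in_R r -> in_I0 (fun s => mulT n r s - r s).
Proof.
move=> hr; exists [:: (n, r)]; split; first by case.
by move=> s; rewrite big_seq1.
Qed.

Fixpoint Mk (k : nat) (r : series) : series :=
  if k is k'.+1 then mulT k' (Mk k' r) else r.

Lemma Mk_R k r : in_R r -> in_R (Mk k r).
Proof. by move=> hr; elim: k => [|k IH] //=; apply: in_R_mulT. Qed.

Lemma Mk_I0 k r : in_R r -> in_I0 (fun s => r s - Mk k r s).
Proof.
move=> hr; elim: k => [|k IH].
  by apply: in_I0_ext in_I0_zero _ => s /=; rewrite subrr.
apply: in_I0_ext (in_I0_add IH (in_I0_neg (in_I0_gen k (Mk_R k hr)))) _ => s /=.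
ring.
Qed.

Lemma Mk_spec k r s : Mk k r s != 0 ->
  exists s', perm_eq s (s' ++ iota 0 k) /\ Mk k r s = r s'.
Proof.
elim: k s => [|k IH] s /=.
  by move=> _; exists s; rewrite cats0 perm_refl.
rewrite /mulT; case: ifP => [/andP [hs ks] /IH [s' [hp ->]]|]; last by rewrite eqxx.
exists s'; split => //.
apply: perm_trans (perm_to_rem ks) _.
rewrite -[(0%N :: iota 1 k)]/(iota 0 k.+1) -addn1 iotaD add0n /= catA cats1 perm_sym perm_rcons perm_cons perm_sym //.
Qed.

Lemma Mk_nonneg k r : (forall s, 0 <= r s) -> forall s, 0 <= Mk k r s.
Proof.
move=> hr; elim: k => [|k IH] s //=.
by rewrite /mulT; case: ifP.
Qed.

Lemma Mk_bound k b r : (forall s, ~~ is_expo s -> r s = 0) ->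
  (forall s, is_expo s -> `|r s| <= (b * multinom s)%:R) -> (b <= k`!)%N ->
  forall s, `|Mk k r s| <= (size (permutations s))%:R.
Proof.
move=> H0 Hb hk s.
have [->|/Mk_spec [s' [hp ->]]] := eqVneq (Mk k r s) 0; first by rewrite normr0.
have [hs'|hs'] := boolP (is_expo s'); last by rewrite H0 // normr0.
apply: le_trans (Hb _ hs') _; rewrite ler_nat multinomE (perms_perm hp).
apply: leq_trans (perms_cat s' (iota 0 k)).
by rewrite (size_permutations (iota_uniq 0 k)) size_iota [X in (_ <= X)%N]mulnC leq_mul2r hk orbT.
Qed.

Lemma sum_eq_count (a : nat) (l : seq nat) :
  (\sum_(i <- l) (a == i))%N = count_mem a l.
Proof. by elim: l => [|i l IH]; rewrite ?big_nil ?big_cons //= IH eq_sym. Qed.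

Lemma size_sum (n : nat) (y : seq nat) : all (fun i => i <= n)%N y ->
  size y = (\sum_(i <- iota 0 n.+1) count_mem i y)%N.
Proof.
elim: y => [|a y IH] /=; first by rewrite big1.
move/andP => [an ay]; rewrite big_split -IH // sum_eq_count.
rewrite -[(0%N :: iota 1 n)]/(iota 0 n.+1) count_uniq_mem ?iota_uniq // mem_iota add0n ltnS an.
by [].
Qed.

Lemma count_take (l : seq (seq nat)) q : uniq l ->
  count (fun t => t \in take q l) l = size (take q l).
Proof.
move=> ul; rewrite -[X in count _ X](cat_take_drop q l) count_cat.
have -> : count (fun t => t \in take q l) (drop q l) = 0%N.
  apply/eqP; rewrite -leqn0 leqNgt -has_count.
  by move: ul; rewrite -{1}(cat_take_drop q l) cat_uniq => /and3P [_ h _].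
by rewrite addn0; apply/eqP; rewrite -all_count; apply/allP => x.
Qed.

Lemma part1 P : in_R P -> (forall s, 0 <= P s) ->
  exists X : pred (seq nat), in_W X /\ in_I0 (fun s => P s - charser X s).
Proof.
move=> hP hpos; have hP' := hP; case: hP' => [H0 _ [b Hb]].
pose Q := Mk b.+1 P.
have QR : in_R Q := Mk_R b.+1 hP.
have Qpos : forall s, 0 <= Q s := @Mk_nonneg b.+1 P hpos.
have Qb : forall s, `|Q s| <= (size (permutations s))%:R.
  apply: (Mk_bound H0 Hb); exact: ltnW (fact_geq b.+1).
pose X := fun x : seq nat =>
  x \in take (absz (Q (sort leq x))) (permutations (sort leq x)).
have cX : forall s, charser X s = Q s.
  move=> s; rewrite /charser; case: ifP => hs.
    rewrite (@eq_in_count _ _ (fun t => t \in take (absz (Q s)) (permutations s))); last first.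
      move=> t; rewrite mem_permutations => ht; rewrite /X.
      have e : sort leq t = s.
        apply: (sorted_eq leq_trans anti_leq (sort_sorted leq_total t) hs).
        by rewrite perm_sort.
      by rewrite e.
    rewrite count_take ?permutations_uniq // size_takel.
      by rewrite gez0_abs.
    by rewrite -(ler_nat int) natz gez0_abs // -(gez0_abs (Qpos s)) Qb.
  by case: QR => [Q0 _ _]; rewrite Q0 // hs.
exists X; split; last first.
  by apply: in_I0_ext (Mk_I0 b.+1 hP) _ => s; rewrite cX.
split.
  by case => //; rewrite /X /Q /= /mulT.
move=> n; case: QR => [_ [d Hd] _].
exists (\sum_(i <- iota 0 n.+1) d i)%N => x Xx xn.
have Qnz : Q (sort leq x) != 0.
  by apply/eqP => hq; move: Xx; rewrite /X hq take0 in_nil.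
have hsx : is_expo (sort leq x) := sort_sorted leq_total x.
have hc : forall i, (count_mem i (sort leq x) <= d i)%N.
  move=> i; rewrite leqNgt; apply/negP => hi; move: Qnz.
  by rewrite (Hd _ hsx) ?eqxx //; exists i.
rewrite -(size_sort leq x) (@size_sum n); last by rewrite all_sort.
by apply: leq_sum => i _; exact: hc.
Qed.

Theorem lemma1p11 :
  (forall P : series, in_Rplus P ->
     exists X : pred (seq nat), in_W X /\ in_I0 (fun s => P s - charser X s))
  /\
  (forall S : series, in_R S ->
     exists (X Y : pred (seq nat)) (S0 : series),
       [/\ in_W X, in_W Y, in_I0 S0 &
           forall s, S s = charser X s - charser Y s + S0 s]).
Proof.
split.
  by move=> P [hP _ hpos]; apply: part1.
move=> S hS.
pose Sp : series := fun s => if 0 <= S s then S s else 0.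
pose Sm : series := fun s => if 0 <= S s then 0 else - S s.
have hSp : in_R Sp.
  apply: (in_R_dom hS) => s; rewrite /Sp; case: ifP => // _; by rewrite normr0.
have hSm : in_R Sm.
  apply: (in_R_dom hS) => s; rewrite /Sm; case: ifP => _;
    by rewrite ?normr0 ?normrN ?oppr0 // => ->; rewrite oppr0.
have [X [WX IX]] : exists X : pred (seq nat), in_W X /\ in_I0 (fun s => Sp s - charser X s).
  apply: part1 hSp _ => s; rewrite /Sp; case: ifP => //.
have [Y [WY IY]] : exists X : pred (seq nat), in_W X /\ in_I0 (fun s => Sm s - charser X s).
  apply: part1 hSm _ => s; rewrite /Sm; case: ifP => // /negbT.
  by rewrite -ltNge oppr_ge0 => /ltW.
exists X, Y, (fun s => (Sp s - charser X s) + - (Sm s - charser Y s)); split => //.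
  exact: in_I0_add IX (in_I0_neg IY).
move=> s; rewrite /Sp /Sm; case: ifP => _; ring.
Qed.
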